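(* For every sufficiently large integer $\ell$, with $m=2^\ell$, and every unsatisfiable $k$-CNF formula $\varphi$ with $M$ clauses on $N$ Boolean variables, $\varphi\circ\mathrm{IND}_m^N$ is a $k(\ell+1)$-CNF formula with $M'=m^kM$ clauses on $N'=N(\ell+m)$ variables, and $$\mathrm{tree}_{Res(\oplus)}(\varphi\circ\mathrm{IND}_m^N)\ge\mathrm{tree}_{Res}(\varphi)\ge 2^{\mathrm{width}_{Res}(\varphi)-k}.$$
   Context: Lifted CNF: with $m=2^\ell$, $\varphi\circ\mathrm{IND}_m^N$ has variables $x_{i,j'}$ ($i\in[N]$, $0\le j'<\ell$) and $y_{i,j}$ ($i\in[N]$, $0\le j<m$); $x_{i,*}$ encodes in binary a number $x_i\in\{0,\dots,m-1\}$ and $z_i$ is interpreted as $y_{i,x_i}$. Each clause $z_{i_1}^{b_1}\lor\cdots\lor z_{i_k}^{b_k}$ of $\varphi$ is replaced by $m^k$ clauses, one for each tuple $(j_1,\dots,j_k)\in\{0,\dots,m-1\}^k$, expressing: if $x_{i_1,*}$ encodes $j_1$, ..., and $x_{i_k,*}$ encodes $j_k$, then $y_{i_1,j_1}^{b_1}\lor\cdots\lor y_{i_k,j_k}^{b_k}$. A resolution refutation of $\varphi$ is a sequence of clauses ending in the empty clause, each being a clause of $\varphi$ or derived from two earlier ones by $\frac{A\lor z,\ B\lor\bar z}{A\lor B}$; it is tree-like if its derivation dag is a tree. $\mathrm{tree}_{Res}(\varphi)$ is the minimum size of a tree-like resolution refutation; $\mathrm{width}_{Res}(\varphi)$ is the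 minimum, over all resolution refutations, of the maximum clause length in it. A $Res(\oplus)$ refutation of $\varphi$ on variables $Z$ is a sequence of affine subspaces of $\mathbb{F}_2^Z$ ending in $\mathbb{F}_2^Z$, each being the set of assignments falsifying some clause of $\varphi$ or derived from two earlier subspaces $A,B$ as any affine subspace $C\subseteq A\cup B$; tree-like if its derivation dag is a tree. $\mathrm{tree}_{Res(\oplus)}(\varphi)$ is the minimum size of a tree-like $Res(\oplus)$ refutation. *)

(* Defs.v *)
From Stdlib Require Import ClassicalEpsilon.
From mathcomp Require Import all_boot.
Set Implicit Arguments. Unset Strict Implicit. Unset Printing Implicit Defensive.

(* A literal (v, b) stands for z_v^b : z_v^true = z_v, z_v^false = ~ z_v. *)
Definition lit (V : finType) := (V * bool)%type.
Definition clause (V : finType) := {set lit V}.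
Definition cnf (V : finType) := {set clause V}.
Definition assign (V : finType) := {ffun V -> bool}.

Definition sat_lit (V : finType) (a : assign V) (l : lit V) : bool := a l.1 == l.2.
Definition sat_clause (V : finType) (a : assign V) (C : clause V) : bool :=
  [exists l in C, sat_lit a l].
Definition unsat (V : finType) (phi : cnf V) : Prop :=
  ~ exists a : assign V, forall C, C \in phi -> sat_clause a C.
Definition is_kCNF (V : finType) (k : nat) (phi : cnf V) : Prop :=
  forall C, C \in phi -> #|C| <= k.

(* minimum of a set of naturals (0 by convention if empty; never used so) *)
Definition pbool (P : Prop) : bool :=
  if excluded_middle_informative P then true else false.
Lemma pboolP (P : nat -> Prop) : (exists n, P n) -> exists n, pbool (P n).
Proof. by case=> n Hn; exists n; rewrite /pbool; case: excluded_middle_informative. Qed.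
Definition nat_min (P : nat -> Prop) : nat :=
  match excluded_middle_informative (exists n, P n) with
  | left H => ex_minn (pboolP H)
  | right _ => 0
  end.

Definition resolvent (V : finType) (C1 C2 : clause V) (v : V) : clause V :=
  (C1 :\ (v, true)) :|: (C2 :\ (v, false)).

Inductive res_tree (V : finType) (phi : cnf V) : clause V -> nat -> Prop :=
| rt_ax C : C \in phi -> res_tree phi C 1
| rt_res C1 C2 s1 s2 v :
    res_tree phi C1 s1 -> res_tree phi C2 s2 ->
    (v, true) \in C1 -> (v, false) \in C2 ->
    res_tree phi (resolvent C1 C2 v) (s1 + s2).+1.

Definition tree_Res (V : finType) (phi : cnf V) : nat :=
  nat_min (fun s => res_tree phi set0 s).

Definition res_refutation (V : finType) (phi : cnf V) (pi : seq (clause V)) : Prop :=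
  [/\ pi != [::], last set0 pi = set0 &
      forall j, j < size pi ->
        nth set0 pi j \in phi \/
        exists C1 C2 v, [/\ C1 \in take j pi, C2 \in take j pi,
                           (v, true) \in C1, (v, false) \in C2 &
                           nth set0 pi j = resolvent C1 C2 v]].

Definition width (V : finType) (pi : seq (clause V)) : nat := \max_(C <- pi) #|C|.

Definition width_Res (V : finType) (phi : cnf V) : nat :=
  nat_min (fun w => exists pi, res_refutation phi pi /\ width pi = w).

Definition xorf (V : finType) (u w : assign V) : assign V := [ffun v => u v (+) w v].
Definition is_linsub (V : finType) (W : {set assign V}) : Prop :=
  [ffun=> false] \in W /\ forall u w, u \in W -> w \in W -> xorf u w \in W.
Definition is_affine (V : finType) (S : {set assign V}) : Prop :=
  S = set0 \/ exists (a : assign V) (W : {set assign V}),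
                is_linsub W /\ S = [set xorf a w | w in W].

Definition falsif (V : finType) (C : clause V) : {set assign V} :=
  [set a : assign V | [forall l in C, ~~ sat_lit a l]].

Inductive xtree (V : finType) (phi : cnf V) : {set assign V} -> nat -> Prop :=
| xt_ax C : C \in phi -> xtree phi (falsif C) 1
| xt_der A B C sA sB :
    xtree phi A sA -> xtree phi B sB -> is_affine C -> C \subset A :|: B ->
    xtree phi C (sA + sB).+1.

Definition tree_ResX (V : finType) (phi : cnf V) : nat :=
  nat_min (fun s => xtree phi setT s).

(* inl (i, j') is x_{i,j'} (j' < ell), inr (i, j) is y_{i,j} (j < m) *)
Definition lvar (N ell : nat) : finType := (('I_N * 'I_ell) + ('I_N * 'I_(2 ^ ell)))%type.

Definition bit (j j' : nat) : bool := odd (j %/ 2 ^ j').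

(* literals of "x_{i,*} encodes j -> y_{i,j}^b" for l = (i, b) *)
Definition lift_lit (N ell : nat) (l : lit 'I_N) (j : 'I_(2 ^ ell)) : clause (lvar N ell) :=
  ((inr (l.1, j) : lvar N ell), l.2)
    |: [set ((inl (l.1, j') : lvar N ell), ~~ bit j j') | j' : 'I_ell].

Definition liftC (N ell : nat) (C : clause 'I_N) (f : {ffun lit 'I_N -> 'I_(2 ^ ell)})
  : clause (lvar N ell) := \bigcup_(l in C) lift_lit l (f l).

Definition liftIND (N ell : nat) (phi : cnf 'I_N) : cnf (lvar N ell) :=
  \bigcup_(C in phi) [set liftC C f | f : {ffun lit 'I_N -> 'I_(2 ^ ell)}].
Arguments liftIND {N} ell phi.

(* Main.v *)
Require Import Defs.
From Stdlib Require Import ClassicalEpsilon Classical.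
From mathcomp Require Import all_boot zify.
Set Implicit Arguments. Unset Strict Implicit. Unset Printing Implicit Defensive.


Lemma bit0n j : bit j 0 = odd j.
Proof. by rewrite /bit expn0 divn1. Qed.
Lemma bitSn j j' : bit j j'.+1 = bit j./2 j'.
Proof. by rewrite /bit expnS divnMA divn2. Qed.

Lemma bit_ex ell (b : nat -> bool) :
  exists2 j, j < 2 ^ ell & forall j', j' < ell -> bit j j' = b j'.
Proof.
elim: ell b => [|ell IH] b; first by exists 0.
have [j lt_j Hj] := IH (fun j' => b j'.+1).
exists (b 0 + j.*2).
  rewrite expnS; move: lt_j; case: (b 0) => /=; lia.
case=> [|j'] lt_j'; first by rewrite bit0n oddD odd_double addbF; case: (b 0).
rewrite bitSn.
rewrite half_bit_double.
exact: Hj.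
Qed.

Lemma bit_inj ell j1 j2 : j1 < 2 ^ ell -> j2 < 2 ^ ell ->
  (forall j', j' < ell -> bit j1 j' = bit j2 j') -> j1 = j2.
Proof.
elim: ell j1 j2 => [|ell IH] j1 j2.
  by rewrite expn0 !ltnS !leqn0 => /eqP -> /eqP ->.
move=> l1 l2 H.
have o : odd j1 = odd j2 by rewrite -!bit0n; apply: H.
have h : j1./2 = j2./2.
  apply: IH; first (rewrite -divn2 ltn_divLR // -expnSr; done).
    by rewrite -divn2 ltn_divLR // -expnSr.
  by move=> j' lj'; rewrite -!bitSn; apply: H.
by rewrite -(odd_double_half j1) -(odd_double_half j2) o h.
Qed.


Lemma pow2_gt0 ell : 0 < 2 ^ ell. Proof. by rewrite expn_gt0. Qed.
Definition o0 ell : 'I_(2 ^ ell) := Ordinal (pow2_gt0 ell).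

Lemma card_bigcup_le (I T : finType) (P : pred I) (F : I -> {set T}) :
  #|\bigcup_(i | P i) F i| <= \sum_(i | P i) #|F i|.
Proof.
elim/big_rec2: _ => [|i y X _ H]; first by rewrite cards0.
apply: leq_trans (leq_card_setU _ _).1 _; by rewrite leq_add2l.
Qed.

Section Lift.
Variables N ell : nat.
Notation V := (lvar N ell).
Notation FF := {ffun lit 'I_N -> 'I_(2 ^ ell)}.
Implicit Types (C : clause 'I_N).

Lemma lift_lit_card (l : lit 'I_N) (j : 'I_(2 ^ ell)) : #|lift_lit l j| <= ell.+1.
Proof.
rewrite /lift_lit cardsU1 -[ell.+1]add1n; apply: leq_add; first by case: (_ \notin _).
by apply: leq_trans (leq_imset_card _ _) _; rewrite card_ord.
Qed.

Lemma liftC_card C (f : FF) : #|liftC C f| <= #|C| * ell.+1.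
Proof.
apply: leq_trans (card_bigcup_le _ _) _.
rewrite -sum_nat_const; apply: leq_sum => l _; exact: lift_lit_card.
Qed.

Lemma liftC_y C (f : FF) l : l \in C -> ((inr (l.1, f l) : V), l.2) \in liftC C f.
Proof. by move=> lC; apply/bigcupP; exists l => //; rewrite /lift_lit setU11. Qed.

Lemma liftC_yinv C (f : FF) i j b :
  ((inr (i, j) : V), b) \in liftC C f -> (i, b) \in C /\ f (i, b) = j.
Proof.
case/bigcupP=> [[i' b'] lC]; rewrite /lift_lit => /setU1P [[-> -> ->]|] //.
by case/imsetP.
Qed.

Lemma liftC_restr C (f : FF) :
  liftC C f = liftC C [ffun l => if l \in C then f l else o0 ell].
Proof. by apply: eq_bigr => l lC; rewrite ffunE lC. Qed.

Lemma liftC_inj C C' (f g : FF) : liftC C f = liftC C' g ->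
  C = C' /\ {in C, f =1 g}.
Proof.
move=> E.
have H1 : forall l, l \in C -> l \in C' /\ g l = f l.
  move=> [i b] lC; have := liftC_y f lC; rewrite E => /liftC_yinv //.
have H2 : forall l, l \in C' -> l \in C.
  move=> [i b] lC; have := liftC_y g lC; rewrite -E => /liftC_yinv; by case.
split; last by move=> l /H1 [_ ->].
by apply/setP=> l; apply/idP/idP => [/H1 []|/H2].
Qed.

Lemma card_liftset C :
  #|[set liftC C f | f : FF]| = (2 ^ ell) ^ #|C|.
Proof.
have -> : [set liftC C f | f : FF] = [set liftC C f | f in pffun_on (o0 ell) C predT].
  apply/setP=> D; apply/imsetP/imsetP => [[f _ ->]|[f _ ->]]; last by exists f.
  exists [ffun l => if l \in C then f l else o0 ell]; last exact: liftC_restr.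
  apply/pffun_onP; split => //; apply/supportP => l lC; by rewrite ffunE (negbTE lC).
rewrite card_in_imset ?card_pffun_on ?card_ord //.
move=> f g /pffun_onP [/supportP sf _] /pffun_onP [/supportP sg _] /liftC_inj [_ E].
apply/ffunP => l; case: (boolP (l \in C)) => lC; first exact: E.
by rewrite sf ?sg.
Qed.

Lemma card_liftIND (phi : cnf 'I_N) :
  #|liftIND ell phi| = \sum_(C in phi) (2 ^ ell) ^ #|C|.
Proof.
rewrite /liftIND big_mkcond /= -sum1_card.
rewrite (partition_disjoint_bigcup addn (fun x => 1)).
  rewrite [RHS]big_mkcond; apply: eq_bigr => C _.
  case: (C \in phi); last by rewrite big_set0.
  by rewrite sum1_card card_liftset.
move=> C C' nCC'; rewrite -setI_eq0.
case: (C \in phi); case: (C' \in phi); rewrite ?set0I ?setI0 //.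
apply/eqP/setP => D; rewrite !inE; apply/negbTE/negP => /andP [/imsetP [f _ ->] /imsetP [g _] /liftC_inj [E _]].
by rewrite E eqxx in nCC'.
Qed.

Lemma kCNF_lift k (phi : cnf 'I_N) : is_kCNF k phi -> is_kCNF (k * (ell + 1)) (liftIND ell phi).
Proof.
move=> Hk D /bigcupP [C Cphi /imsetP [f _ ->]].
apply: leq_trans (liftC_card C f) _; rewrite addn1 leq_mul2r Hk //; exact: orbT.
Qed.

End Lift.


Section BSW.
Variable V : finType.
Implicit Types (F : cnf V) (C D E : clause V) (q : lit V).

Definition neg q : lit V := (q.1, ~~ q.2).
Definition restr F q : cnf V := [set C :\ neg q | C in F & q \notin C].
Definition vars F : {set V} := [set v | [exists C in F, [exists b, (v, b) \in C]]].

Inductive wd F (w : nat) : clause V -> Prop :=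
| wd_ax C : C \in F -> #|C| <= w -> wd F w C
| wd_res C1 C2 v : wd F w C1 -> wd F w C2 -> (v, true) \in C1 -> (v, false) \in C2 ->
    #|resolvent C1 C2 v| <= w -> wd F w (resolvent C1 C2 v).

Lemma wd_mono F w w' C : w <= w' -> wd F w C -> wd F w' C.
Proof.
move=> ww; elim=> [D DF hD|C1 C2 v _ H1 _ H2 h1 h2 hR]; first by apply: wd_ax; lia.
by apply: wd_res => //; lia.
Qed.

Lemma rt_pos F C s : res_tree F C s -> 0 < s.
Proof. by case. Qed.

Lemma rt_vars F C s : res_tree F C s -> forall v b, (v, b) \in C -> v \in vars F.
Proof.
elim=> [D DF|C1 C2 s1 s2 u _ H1 _ H2 _ _] v b.
  by move=> vD; rewrite inE; apply/existsP; exists D; rewrite DF; apply/existsP; exists b.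
by rewrite /resolvent inE => /orP [/setD1P [_ /H1] | /setD1P [_ /H2]].
Qed.

Lemma vars_restr F q : vars (restr F q) \subset vars F :\ q.1.
Proof.
apply/subsetP => v; rewrite !inE => /existsP [D /andP [/imsetP [C /setIdP [CF qC] ->]]].
move=> /existsP [b]; rewrite !inE => /andP [nb vbC].
apply/andP; split.
  apply/eqP => ev.
  have : (v, b) = q \/ (v, b) = neg q.
    by case: q qC nb ev => x c /= _ _ ->; rewrite /neg /=; case: b {vbC}; case: c; auto.
  by case => E; [rewrite -E vbC in qC | rewrite E eqxx in nb].
by apply/existsP; exists C; rewrite CF; apply/existsP; exists b.
Qed.

Lemma vars_restr_le F q : vars (restr F q) \subset vars F.
Proof. apply: subset_trans (vars_restr F q) _; exact: subD1set. Qed.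

Lemma kCNF_restr k F q : is_kCNF k F -> is_kCNF k (restr F q).
Proof.
move=> Hk D /imsetP [C /setIdP [CF _] ->].
apply: leq_trans (Hk _ CF); apply: subset_leq_card; exact: subD1set.
Qed.

Lemma rt_restr F C s q : res_tree F C s ->
  q \in C \/ exists D s', [/\ D \subset C :\ neg q, res_tree (restr F q) D s' & s' <= s].
Proof.
elim=> [D DF|C1 C2 s1 s2 v T1 IH1 T2 IH2 v1 v2].
  case: (boolP (q \in D)) => qD; first by left.
  right; exists (D :\ neg q), 1; split => //; apply: rt_ax; apply/imsetP; exists D => //.
  by rewrite inE DF.
set R := resolvent C1 C2 v.
have hR1 : forall x, x \in C1 -> x != (v, true) -> x \in R.
  by move=> x xC nx; rewrite /R /resolvent inE; apply/orP; left; apply/setD1P.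
have hR2 : forall x, x \in C2 -> x != (v, false) -> x \in R.
  by move=> x xC nx; rewrite /R /resolvent inE; apply/orP; right; apply/setD1P.
have caseA : forall D1 s1', D1 \subset C1 :\ neg q -> res_tree (restr F q) D1 s1' -> s1' <= s1 ->
    (v, true) \notin D1 ->
    exists D s', [/\ D \subset R :\ neg q, res_tree (restr F q) D s' & s' <= (s1 + s2).+1].
  move=> D1 s1' sub T l nv; exists D1, s1'; split => //; last by lia.
  apply/subsetP => x xD; move: (subsetP sub x xD); rewrite in_setD1 => /andP [nq xC1]; rewrite in_setD1 nq /=.
  by apply: hR1 => //; apply: contraNneq nv => <-.
have caseB : forall D2 s2', D2 \subset C2 :\ neg q -> res_tree (restr F q) D2 s2' -> s2' <= s2 ->
    (v, false) \notin D2 ->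
    exists D s', [/\ D \subset R :\ neg q, res_tree (restr F q) D s' & s' <= (s1 + s2).+1].
  move=> D2 s2' sub T l nv; exists D2, s2'; split => //; last by lia.
  apply/subsetP => x xD; move: (subsetP sub x xD); rewrite in_setD1 => /andP [nq xC2]; rewrite in_setD1 nq /=.
  by apply: hR2 => //; apply: contraNneq nv => <-.
case: IH1 => [qC1|[D1 [s1' [sub1 T1' l1]]]].
  case: (eqVneq q (v, true)) => [eq1|]; last by move=> nq; left; apply: hR1.
  case: IH2 => [qC2|[D2 [s2' [sub2 T2' l2]]]].
    by left; apply: hR2 => //; rewrite eq1; apply/eqP; case.
  right; apply: (caseB D2 s2') => //.
  by apply/negP => /(subsetP sub2); rewrite !inE /neg eq1 /= eqxx.
case: (boolP ((v, true) \in D1)) => vD1; last by right; apply: (caseA D1 s1').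
case: IH2 => [qC2|[D2 [s2' [sub2 T2' l2]]]].
  case: (eqVneq q (v, false)) => [eq2|]; last by move=> nq; left; apply: hR2.
  by move: (subsetP sub1 _ vD1); rewrite !inE /neg eq2 /= eqxx.
case: (boolP ((v, false) \in D2)) => vD2; last by right; apply: (caseB D2 s2').
right; exists (resolvent D1 D2 v), (s1' + s2').+1; split; last by lia.
  apply/subsetP => x; rewrite {1}/resolvent inE => /orP [] /setD1P [nx xD].
    move: (subsetP sub1 x xD); rewrite in_setD1 => /andP [nq xC1]; rewrite in_setD1 nq /=.
    by apply: hR1.
  move: (subsetP sub2 x xD); rewrite in_setD1 => /andP [nq xC2]; rewrite in_setD1 nq /=.
  by apply: hR2.
exact: rt_res.
Qed.

Lemma wd_lift F q w D : wd (restr F q) w D ->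
  exists D', [/\ D \subset D', D' \subset neg q |: D & wd F w.+1 D'].
Proof.
elim=> [E /imsetP [C /setIdP [CF qC] ->] hE|D1 D2 v _ [E1 [s1 s1' W1]] _ [E2 [s2 s2' W2]] v1 v2 hR].
  exists C; split.
  - exact: subD1set.
  - by apply/subsetP => x xC; rewrite !inE xC andbT; case: eqP.
  - apply: wd_ax => //; apply: (@leq_trans #|neg q |: (C :\ neg q)|).
      by apply: subset_leq_card; apply/subsetP => x xC; rewrite !inE; case: eqP.
    by rewrite cardsU1 -add1n; apply: leq_add => //; case: (_ \notin _).
exists (resolvent E1 E2 v).
have sR : resolvent E1 E2 v \subset neg q |: resolvent D1 D2 v.
  apply/subsetP => x; rewrite /resolvent !inE => /orP [] /andP [nx xE].
    by move: (subsetP s1' x xE); rewrite !inE => /orP [-> //| xD]; rewrite nx xD /= orbT.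
  by move: (subsetP s2' x xE); rewrite !inE => /orP [-> //| xD]; rewrite nx xD /= !orbT.
split => //.
  apply/subsetP => x; rewrite /resolvent !inE => /orP [] /andP [nx xD].
    by rewrite nx (subsetP s1 x xD).
  by rewrite nx (subsetP s2 x xD) orbT.
apply: wd_res => //; [exact: (subsetP s1) | exact: (subsetP s2)|].
apply: leq_trans (subset_leq_card sR) _.
by rewrite cardsU1 -add1n; apply: leq_add => //; case: (_ \notin _).
Qed.

Lemma set1D1 (a : lit V) : [set a] :\ a = set0.
Proof. by apply/setP => y; rewrite !inE; case: eqP. Qed.

Lemma neg_neq q : (neg q == q) = false.
Proof. by case: q => x b; rewrite /neg xpair_eqE eqxx /=; case: b. Qed.

Lemma negK q : neg (neg q) = q.
Proof. by case: q => x b; rewrite /neg /= negbK. Qed.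

Lemma wd_unres F q w k E : is_kCNF k F -> k <= w -> wd F w [set q] ->
  wd (restr F q) w E -> wd F w E.
Proof.
move=> Hk kw Wq; elim=> [D /imsetP [C /setIdP [CF qC] ->] hE|D1 D2 v _ W1 _ W2 v1 v2 hR].
  case: (boolP (neg q \in C)) => nqC; last first.
    have -> : C :\ neg q = C.
      by apply/setP => y; rewrite in_setD1; case: eqP => // ->; rewrite (negbTE nqC).
    apply: wd_ax => //; exact: leq_trans (Hk _ CF) kw.
  case: q qC Wq nqC hE => x [] qC Wq nqC hE.
    have -> : C :\ neg (x, true) = resolvent [set (x, true)] C x.
      by rewrite /resolvent set1D1 set0U.
    apply: wd_res; try done; try exact nqC; try (by rewrite set11); try (by apply: wd_ax => //; exact: leq_trans (Hk _ CF) kw).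
    rewrite /resolvent set1D1 ?set0U ?setU0; apply: (leq_trans _ (leq_trans (Hk _ CF) kw)); apply: subset_leq_card; apply: subD1set.
  have -> : C :\ neg (x, false) = resolvent C [set (x, false)] x.
    by rewrite /resolvent set1D1 setU0.
  apply: wd_res; try done; try exact nqC; try (by rewrite set11); try (by apply: wd_ax => //; exact: leq_trans (Hk _ CF) kw).
    rewrite /resolvent set1D1 ?set0U ?setU0; apply: (leq_trans _ (leq_trans (Hk _ CF) kw)); apply: subset_leq_card; apply: subD1set.
exact: wd_res.
Qed.

Lemma rt_inv0 F s : res_tree F set0 s -> set0 \in F \/
  exists v s1 s2, [/\ res_tree F [set (v, true)] s1, res_tree F [set (v, false)] s2 & s = (s1 + s2).+1].
Proof.
have key : forall C s, res_tree F C s -> C = set0 -> set0 \in F \/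
  exists v s1 s2, [/\ res_tree F [set (v, true)] s1, res_tree F [set (v, false)] s2 & s = (s1 + s2).+1].
  move=> C s0 [D DF E0|C1 C2 s1 s2 v T1 T2 v1 v2 E]; first by left; rewrite -E0.
  right; exists v, s1, s2.
  have e1 : C1 = [set (v, true)].
    apply/setP => x; rewrite inE; apply/idP/eqP => [xC|->//]; apply/eqP/negPn/negP => nx.
    have : x \in resolvent C1 C2 v by rewrite /resolvent !inE nx xC.
    by rewrite E inE.
  have e2 : C2 = [set (v, false)].
    apply/setP => x; rewrite inE; apply/idP/eqP => [xC|->//]; apply/eqP/negPn/negP => nx.
    have : x \in resolvent C1 C2 v by rewrite /resolvent !inE nx xC orbT.
    by rewrite E inE.
  by rewrite -e1 -e2.
by move=> H; apply: (key _ _ H).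
Qed.

Lemma bsw k c : forall n F s, #|vars F| < n -> is_kCNF k F -> s < 2 ^ c.+1 ->
  res_tree F set0 s -> wd F (k + c) set0.
Proof.
elim: c => [|c IHc] n F s.
  move=> _ _ hs /rt_inv0 [H|[v [s1 [s2 [T1 T2 E]]]]]; first by apply: wd_ax; rewrite ?cards0.
  by move: (rt_pos T1) (rt_pos T2) hs; rewrite E expn1; lia.
elim: n F s => [//|n IHn] F s hv hk hs /rt_inv0 [H|[v [s1 [s2 [T1 T2 E]]]]].
  by apply: wd_ax; rewrite ?cards0.
have step : forall q sa sb, res_tree F [set q] sa -> res_tree F [set neg q] sb ->
    sa < 2 ^ c.+1 -> sb < 2 ^ c.+2 -> wd F (k + c.+1) set0.
  move=> q sa sb Ta Tb ha hb.
  have [|[D [s' [sD Td ls]]]] := rt_restr (neg q) Ta.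
    by rewrite inE neg_neq.
  move: sD; rewrite negK set1D1 subset0 => /eqP D0; subst D.
  have W1 := IHc n.+1 (restr F (neg q)) s'
    (leq_ltn_trans (subset_leq_card (vars_restr_le F (neg q))) hv)
    (kCNF_restr (q:=neg q) hk) (leq_ltn_trans ls ha) Td.
  have [D' [_ sD' W']] := wd_lift W1.
  rewrite negK setU0 in sD'.
  have [D'0|] := eqVneq D' set0; first by rewrite -D'0 addnS.
  move=> nD'; have eD' : D' = [set q].
    apply/eqP; rewrite eqEsubset sD' /=; apply/subsetP => x; rewrite inE => /eqP ->.
    case/set0Pn: nD' => y yD; by move: (subsetP sD' y yD); rewrite inE => /eqP <-.
  subst D'; rewrite -addnS in W'.
  have [|[D [s'' [sD2 Td2 ls2]]]] := rt_restr q Tb.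
    by rewrite inE eq_sym neg_neq.
  move: sD2; rewrite set1D1 subset0 => /eqP D0; subst D.
  have qv : q.1 \in vars F by apply: (rt_vars Ta (b := q.2)); rewrite -surjective_pairing set11.
  have hv2 : #|vars (restr F q)| < n.
    have := subset_leq_card (vars_restr F q); have := cardsD1 q.1 (vars F); rewrite qv /=.
    move: hv; lia.
  have W2 := IHn (restr F q) s'' hv2 (kCNF_restr (q:=q) hk) (leq_ltn_trans ls2 hb) Td2.
  by apply: (wd_unres hk _ W') W2; lia.
case: (leqP (2 ^ c.+1) s1) => h1.
  by apply: (step (v, false) s2 s1 T2 T1); move: hs; rewrite E (expnS 2 c.+1); lia.
by apply: (step (v, true) s1 s2 T1 T2); move: hs; rewrite E (expnS 2 c.+1); lia.
Qed.

End BSW.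


Lemma pboolE (P : Prop) : pbool P -> P.
Proof. by rewrite /pbool; case: excluded_middle_informative. Qed.
Lemma pboolI (P : Prop) : P -> pbool P.
Proof. by rewrite /pbool; case: excluded_middle_informative. Qed.

Lemma nat_min_le (P : nat -> Prop) n : P n -> nat_min P <= n.
Proof.
move=> Pn; rewrite /nat_min; case: excluded_middle_informative => [H|H]; last by [].
case: ex_minnP => m _ Hmin; apply: Hmin; exact: pboolI.
Qed.

Lemma nat_min_P (P : nat -> Prop) : (exists n, P n) -> P (nat_min P).
Proof.
move=> ex; rewrite /nat_min; case: excluded_middle_informative => [H|//].
by case: ex_minnP => m Hm _; apply: pboolE.
Qed.

Section Seq.
Variable V : finType.
Implicit Types (F : cnf V) (C : clause V) (pi : seq (clause V)).

Definition valid F pi := forall j, j < size pi ->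
  nth set0 pi j \in F \/
  exists C1 C2 v, [/\ C1 \in take j pi, C2 \in take j pi,
                     (v, true) \in C1, (v, false) \in C2 &
                     nth set0 pi j = resolvent C1 C2 v].

Lemma valid_cat F pi1 pi2 : valid F pi1 -> valid F pi2 -> valid F (pi1 ++ pi2).
Proof.
move=> V1 V2 j; rewrite size_cat nth_cat => hj.
case: (ltnP j (size pi1)) => h.
  rewrite take_cat h; exact: V1.
rewrite take_cat ltnNge h /=.
have hj2 : j - size pi1 < size pi2 by lia.
case: (V2 _ hj2) => [->|[C1 [C2 [v [c1 c2 v1 v2 E]]]]]; first by left.
by right; exists C1, C2, v; rewrite !mem_cat c1 c2 !orbT.
Qed.

Lemma valid1 F C : C \in F -> valid F [:: C].
Proof. by move=> CF [|j] //= _; left. Qed.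

Lemma valid_snoc F pi R : valid F pi ->
  (R \in F \/ exists C1 C2 v, [/\ C1 \in pi, C2 \in pi, (v, true) \in C1, (v, false) \in C2 &
                     R = resolvent C1 C2 v]) -> valid F (pi ++ [:: R]).
Proof.
move=> V1 HR j; rewrite size_cat /= addn1 ltnS nth_cat leq_eqVlt => /orP [/eqP ->|h].
  by rewrite ltnn subnn take_size_cat.
rewrite h take_cat h; exact: V1.
Qed.

Lemma valid_res F pi1 pi2 v : valid F pi1 -> valid F pi2 -> pi1 != [::] -> pi2 != [::] ->
  (v, true) \in last set0 pi1 -> (v, false) \in last set0 pi2 ->
  valid F ((pi1 ++ pi2) ++ [:: resolvent (last set0 pi1) (last set0 pi2) v]).
Proof.
move=> V1 V2 n1 n2 v1 v2; apply: valid_snoc; first exact: valid_cat.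
right; exists (last set0 pi1), (last set0 pi2), v; split => //.
  case: pi1 n1 {V1 v1} => // x s _; rewrite mem_cat; apply/orP; left.
  by rewrite /=; exact: mem_last.
case: pi2 n2 {V2 v2} => // x s _; rewrite mem_cat; apply/orP; right.
by rewrite /=; exact: mem_last.
Qed.

Lemma wd_seq F w C : wd F w C -> exists pi,
  [/\ pi != [::], last set0 pi = C, valid F pi & forall D, D \in pi -> #|D| <= w].
Proof.
elim=> [D DF hD|C1 C2 v _ [p1 [n1 l1 V1 W1]] _ [p2 [n2 l2 V2 W2]] v1 v2 hR].
  exists [:: D]; split => //; first exact: valid1.
  by move=> E; rewrite inE => /eqP ->.
exists ((p1 ++ p2) ++ [:: resolvent C1 C2 v]); split.
- by case: p1 n1 {l1 V1 W1}.
- by rewrite last_cat.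
- by rewrite -l1 -l2; apply: valid_res => //; rewrite ?l1 ?l2.
- move=> D; rewrite !mem_cat inE => /orP [/orP [/W1|/W2]|/eqP ->] //.
Qed.

Lemma wd_width F w : wd F w set0 -> width_Res F <= w.
Proof.
case/wd_seq => pi [n l Vp W].
apply: (@leq_trans (width pi)).
  apply: nat_min_le; exists pi; split => //; split => //.
apply/bigmax_leqP_seq => D Dpi _; exact: W.
Qed.

End Seq.

Lemma bsw_final (V : finType) k (F : cnf V) s : is_kCNF k F -> res_tree F set0 s ->
  2 ^ (width_Res F - k) <= s.
Proof.
move=> hk T; have s0 := rt_pos T.
set c := trunc_log 2 s.
have W := bsw (ltnSn _) hk (trunc_log_ltn s (isT : 1 < 2)) T.
have hw := wd_width W.
apply: leq_trans (trunc_logP (isT : 1 < 2) s0).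
apply: leq_pexp2l => //; lia.
Qed.


Ltac xsolve := apply/ffunP => ?; rewrite !ffunE;
  repeat match goal with |- context [fun_of_fin ?f ?v] => case: (fun_of_fin f v) end; try done.

Section Xor.
Variable T : finType.
Notation A := (assign T).
Implicit Types (x y z t : A) (X : {set A}).

Definition closed3 X := forall x y z, x \in X -> y \in X -> z \in X -> xorf x (xorf y z) \in X.
Definition c3P (P : A -> Prop) := forall x y z, P x -> P y -> P z -> P (xorf x (xorf y z)).
Definition ev (u : T) : A := [ffun v => v == u].
Definition flip u t := xorf t (ev u).
Definition ind (S : {set T}) : A := [ffun v => v \in S].

Lemma closed3I X Y : closed3 X -> closed3 Y -> closed3 (X :&: Y).
Proof.
move=> cX cY x y z; rewrite !inE => /andP [x1 x2] /andP [y1 y2] /andP [z1 z2].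
by rewrite cX ?cY.
Qed.

Lemma closed3T : closed3 setT.
Proof. by move=> *; rewrite inE. Qed.

Lemma closed3_falsif (C : clause T) : closed3 (falsif C).
Proof.
move=> x y z; rewrite !inE => /forall_inP Hx /forall_inP Hy /forall_inP Hz.
apply/forall_inP => l lC; move: (Hx l lC) (Hy l lC) (Hz l lC); rewrite /sat_lit !ffunE.
by case: (x l.1); case: (y l.1); case: (z l.1); case: l.2.
Qed.

Lemma closed3_affine S : is_affine S -> closed3 S.
Proof.
case=> [->|[a [W [LW ->]]]]; first by move=> x; rewrite inE.
case: LW => W0 WX.
move=> _ _ _ /imsetP [w1 w1W ->] /imsetP [w2 w2W ->] /imsetP [w3 w3W ->].
apply/imsetP; exists (xorf w1 (xorf w2 w3)); first exact: (WX _ _ w1W (WX _ _ w2W w3W)).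
xsolve.
Qed.

Lemma set_flip_ind (P : A -> Prop) :
  (forall u t, P (flip u t) <-> P t) -> forall S t, P (xorf t (ind S)) <-> P t.
Proof.
move=> Hf S; move: {2}#|S| (erefl #|S|) => n; elim: n S => [|n IH] S hS t.
  have -> : S = set0 by apply/eqP; rewrite -cards_eq0 hS.
  have -> : xorf t (ind set0) = t by apply/ffunP => v; rewrite !ffunE inE addbF.
  done.
have : S != set0 by rewrite -cards_eq0 hS.
case/set0Pn => u uS.
have -> : xorf t (ind S) = flip u (xorf t (ind (S :\ u))).
  apply/ffunP => v; rewrite !ffunE in_setD1; case: eqP => [->|_]; rewrite ?uS.
    by case: (t u).
  by rewrite addbF.
rewrite Hf; apply: IH; rewrite (cardsD1 u S) uS in hS; lia.
Qed.

Lemma hyper (U : pred T) (P Q : A -> Prop) :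
  (forall t t', (forall v, U v -> t v = t' v) -> P t -> P t') ->
  c3P P -> c3P Q -> (forall t, P t \/ Q t) -> (exists t, ~ P t) -> (exists t, ~ Q t) ->
  exists u, U u /\ forall t, P (flip u t) <-> ~ P t.
Proof.
move=> dep cP cQ PQ [x nPx] [z nQz].
have Pz : P z by case: (PQ z).
pose d := xorf x z.
have step1 : forall t, P t -> ~ P (xorf t d).
  move=> t Pt Ptd; apply: nPx.
  have -> : x = xorf t (xorf (xorf t d) z) by rewrite /d; xsolve.
  exact: cP.
have step2 : forall t, ~ P t -> P (xorf t d).
  move=> t nPt; apply: NNPP => nPtd; apply: nQz.
  have Qt : Q t by case: (PQ t).
  have Qtd : Q (xorf t d) by case: (PQ (xorf t d)).
  have Qx : Q x by case: (PQ x).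
  have -> : z = xorf t (xorf (xorf t d) x) by rewrite /d; xsolve.
  exact: cQ.
have flipd : forall t, P (xorf t d) <-> ~ P t.
  by move=> t; split => [H Pt|]; [exact: step1 Pt H | exact: step2].
have dich : forall w, (exists t0, P t0 <-> P (xorf t0 w)) -> forall t, P (xorf t w) <-> P t.
  move=> w [t0 H0].
  have [t1 [P1 P1w]] : exists t1, P t1 /\ P (xorf t1 w).
    case: (classic (P t0)) => h0; first by exists t0; split => //; apply/H0.
    exists (xorf t0 d); split; first exact: step2.
    have -> : xorf (xorf t0 d) w = xorf (xorf t0 w) d by xsolve.
    by apply: step2 => /H0.
  move=> t; split => H.
    have -> : t = xorf (xorf t w) (xorf t1 (xorf t1 w)) by xsolve.
    exact: cP.
  have -> : xorf t w = xorf t (xorf t1 (xorf t1 w)) by xsolve.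
  exact: cP.
apply: NNPP => nex.
have allf : forall u t, P (flip u t) <-> P t.
  move=> u; case: (boolP (U u)) => Uu.
    apply: dich; apply: NNPP => ne; apply: nex; exists u; split => //.
    move=> t; split => [H Pt|H].
      by apply: ne; exists t; split => // _.
    by apply: NNPP => nP; apply: ne; exists t; split => //.
  move=> t; split; apply: dep => v Uv; rewrite /flip !ffunE;
    (case: eqP => [e|_]; [by move: Uu; rewrite -e Uv | by rewrite addbF]).
have := set_flip_ind allf [set v | d v] z.
have -> : ind [set v | d v] = d by apply/ffunP => v; rewrite /ind ffunE inE.
rewrite flipd => -[_ HH]; exact: (HH Pz Pz).
Qed.

Definition cube (a : A) (S : {set T}) : {set A} :=
  [set x : A | [forall v, (v \notin S) ==> (x v == a v)]].

Lemma cube_affine a S : is_affine (cube a S).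
Proof.
right; exists a, [set w : A | [forall v, (v \notin S) ==> ~~ w v]]; split.
  split; first by rewrite inE; apply/forall_inP => v _; rewrite ffunE.
  move=> u w; rewrite !inE => /forall_inP Hu /forall_inP Hw; apply/forall_inP => v vS.
  by rewrite ffunE (negbTE (Hu v vS)) (negbTE (Hw v vS)).
apply/setP => x; rewrite inE; apply/forall_inP/imsetP => [H|[w]].
  exists (xorf a x); last by xsolve.
  rewrite inE; apply/forall_inP => v vS; by rewrite ffunE (eqP (H v vS)) addbb.
rewrite inE => /forall_inP Hw -> v vS; by rewrite ffunE (negbTE (Hw v vS)) addbF.
Qed.

Lemma cube0 a : cube a set0 = [set a].
Proof.
apply/setP => x; rewrite !inE; apply/forall_inP/eqP => [H|->]; last by [].
by apply/ffunP => v; apply/eqP; apply: H; rewrite inE.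
Qed.

Lemma cubeT a : cube a setT = setT.
Proof. by apply/setP => x; rewrite !inE; apply/forall_inP => v; rewrite inE. Qed.

Lemma cube_split a (S : {set T}) (u : T) : u \in S ->
  cube a S \subset cube a (S :\ u) :|: cube (flip u a) (S :\ u).
Proof.
move=> uS; apply/subsetP => x; rewrite !inE => /forall_inP H.
case: (eqVneq (x u) (a u)) => hu.
  apply/orP; left; apply/forall_inP => v; rewrite in_setD1 negb_and negbK.
  by case/orP => [/eqP ->|]; [rewrite hu | exact: H].
apply/orP; right; apply/forall_inP => v; rewrite in_setD1 negb_and negbK /flip !ffunE.
case/orP => [/eqP ->|vS]; first by rewrite eqxx; case: (x u) (a u) hu => [] [].
have -> : (v == u) = false by apply/negbTE; apply: contraNneq vS => ->.
by rewrite addbF; apply: H.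
Qed.

Lemma xtree_complete (phi : cnf T) : unsat phi -> exists s, xtree phi setT s.
Proof.
move=> un.
suff : forall n (S : {set T}) a, #|S| = n -> exists s, xtree phi (cube a S) s.
  by move=> H; have [s Hs] := H _ setT [ffun=> false] (erefl _); exists s; rewrite -(cubeT [ffun=> false]).
elim=> [|n IH] S a hS.
  have -> : S = set0 by apply/eqP; rewrite -cards_eq0 hS.
  have [C [CF aC]] : exists C, C \in phi /\ ~~ sat_clause a C.
    apply: NNPP => ne; apply: un; exists a => C CF; apply: NNPP => nC; apply: ne.
    by exists C; split => //; apply/negP.
  exists 3; apply: (@xt_der _ _ (falsif C) (falsif C) _ 1 1); try exact: xt_ax.
    by rewrite cube0 -cube0; apply: cube_affine.
  rewrite cube0 setUid sub1set inE; apply/forall_inP => l lC.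
  by apply: contraNN aC => sl; apply/exists_inP; exists l.
have : S != set0 by rewrite -cards_eq0 hS.
case/set0Pn => u uS.
have hS' : #|S :\ u| = n by move: hS; rewrite (cardsD1 u S) uS; lia.
have [s1 T1] := IH _ a hS'.
have [s2 T2] := IH _ (flip u a) hS'.
exists (s1 + s2).+1; apply: xt_der T1 T2 (cube_affine _ _) (cube_split _ uS).
Qed.

End Xor.


Lemma xtree_closed3 (T : finType) (phi : cnf T) Y s : xtree phi Y s -> closed3 Y.
Proof. case=> [C _|A B C sA sB _ _ aC _]; [exact: closed3_falsif | exact: closed3_affine]. Qed.

Section Lifting.
Variables (N ell : nat) (hl : 0 < ell) (phi : cnf 'I_N).
Notation V := (lvar N ell).
Notation A := (assign V).
Notation m := (2 ^ ell).
Notation RHO := {ffun 'I_N -> option bool}.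
Implicit Types (C : clause 'I_N).

Definition block (v : V) : 'I_N := match v with inl p => p.1 | inr p => p.1 end.
Definition encodes (x : A) (i : 'I_N) (j : 'I_m) := forall j' : 'I_ell, x (inl (i, j')) = bit j j'.
Definition agreeU (rho : RHO) (x t : A) := forall v, rho (block v) = None -> x v = t v.
Record inv (rho : RHO) (X : {set A}) : Prop := Inv {
  inv3 : closed3 X;
  invb : forall i b, rho i = Some b -> forall x, x \in X -> forall j, encodes x i j -> x (inr (i, j)) = b;
  invc : forall t, exists2 x, x \in X & agreeU rho x t }.
Definition falsified (rho : RHO) (C : clause 'I_N) := forall l, l \in C -> rho l.1 = Some (~~ l.2).

Lemma liftC_x C (f : {ffun lit 'I_N -> 'I_m}) l (j' : 'I_ell) : l \in C ->
  ((inl (l.1, j') : V), ~~ bit (f l) j') \in liftC C f.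
Proof.
move=> lC; apply/bigcupP; exists l => //; rewrite /lift_lit; apply/setU1P; right.
by apply/imsetP; exists j'.
Qed.

Lemma leaf rho X C f : inv rho X -> X \subset falsif (liftC C f) -> falsified rho C.
Proof.
move=> [c3 hb hc] sub [i b] lC /=.
have notsat : forall x, x \in X -> forall lit, lit \in liftC C f -> ~~ sat_lit x lit.
  by move=> x xX lit hlit; move: (subsetP sub x xX); rewrite inE => /forall_inP; apply.
case E: (rho i) => [be|].
  suff : be != b by case: be {E}; case: b {lC}.
  apply/negP => /eqP eb; subst be.
  have [x xX _] := hc [ffun=> false].
  case: (boolP [forall j' : 'I_ell, x (inl (i, j')) == bit (f (i, b)) j']) => H.
    have enc : encodes x i (f (i, b)) by move=> j'; apply/eqP; exact: (forallP H j').
    have := notsat x xX _ (liftC_y f lC); rewrite /sat_lit /= (hb _ _ E _ xX _ enc).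
    by rewrite eqxx.
  move: H; rewrite negb_forall => /existsP [j' nj].
  have := notsat x xX _ (liftC_x f j' lC); rewrite /sat_lit /=.
  by case: (x _) nj; case: (bit _ _).
pose t : A := [ffun v => match v with inl p => false | inr p => b end].
have [x xX ag] := hc t.
have := notsat x xX _ (liftC_y f lC); rewrite /sat_lit /= ag //= ffunE.
by rewrite eqxx.
Qed.

Lemma one_lt_m : 1 < m.
Proof. by rewrite -{1}(expn0 2) ltn_exp2l. Qed.

Definition jalt (j0 : 'I_m) : 'I_m :=
  if val j0 == 0 then Ordinal one_lt_m else Ordinal (pow2_gt0 ell).

Lemma jalt_neq j0 : jalt j0 != j0.
Proof. rewrite /jalt; case: ifP => h; apply/eqP => e; rewrite -e /= in h; done. Qed.

Definition j1 (u : V) : 'I_m := match u with inl _ => o0 ell | inr p => jalt p.2 end.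
Definition stif (u : V) (be : bool) : A :=
  [ffun v : V => match v with inl p => bit (j1 u) p.2 | inr _ => be end].
Definition Fset (u : V) be : {set A} :=
  [set x : A | [forall v, ((block v == block u) && (v != u)) ==> (x v == stif u be v)]].

Lemma Fset_closed3 u be : closed3 (Fset u be).
Proof.
move=> x y z; rewrite !inE => /forall_inP Hx /forall_inP Hy /forall_inP Hz.
apply/forall_inP => v hv; move: (Hx v hv) (Hy v hv) (Hz v hv); rewrite !ffunE.
by move=> /eqP -> /eqP -> /eqP ->; rewrite addbb addbF.
Qed.

Lemma stifle u be x j : x \in Fset u be -> encodes x (block u) j -> x (inr (block u, j)) = be.
Proof.
rewrite inE => /forall_inP H enc.
case: u H enc => [[i0 j0']|[i0 j0]] H enc /=.
  by have := H (inr (i0, j)); rewrite /= eqxx /= ffunE => /(_ isT) /eqP.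
have ej : j = jalt j0.
  apply: val_inj; apply: (@bit_inj ell); rewrite ?ltn_ord // => j' lj'.
  have := H (inl (i0, Ordinal lj')); rewrite /= eqxx /= ffunE /= => /(_ isT) /eqP.
  by rewrite -(enc (Ordinal lj')).
have := H (inr (i0, j)); rewrite /= eqxx /= ffunE => h; apply/eqP; apply: h.
apply/eqP => -[] e; move: (jalt_neq j0); by rewrite -ej e eqxx.
Qed.

Definition upd (rho : RHO) i be : RHO := [ffun i' => if i' == i then Some be else rho i'].

Lemma branch rho X (R : {set A}) u be :
  inv rho X -> closed3 R -> rho (block u) = None ->
  (forall t, (exists2 x, x \in X :&: R & agreeU rho x t) \/
             (exists2 x, x \in X :&: R & agreeU rho x (flip u t))) ->
  inv (upd rho (block u) be) (X :&: R :&: Fset u be).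
Proof.
move=> [c3 hb hc] cR ru H; split.
- by apply: closed3I; [apply: closed3I | apply: Fset_closed3].
- move=> i b; rewrite ffunE; case: eqP => [->|_] hi x; rewrite !in_setI => /andP [/andP [xX _] xF] j enc.
    by case: hi => <-; apply: stifle.
  exact: hb hi x xX j enc.
move=> t.
pose t0 : A := [ffun v : V => if (block v == block u) && (v != u) then stif u be v else t v].
have key : forall t'' : A, (forall v, v != u -> t'' v = t0 v) ->
    (exists2 x, x \in X :&: R & agreeU rho x t'') ->
    exists2 x, x \in X :&: R :&: Fset u be & agreeU (upd rho (block u) be) x t.
  move=> t'' ht [x xXR ag]; exists x.
    rewrite inE xXR /= inE; apply/forall_inP => v /andP [bv nv].
    by rewrite ag ?(eqP bv) // ht // ffunE bv nv.
  move=> v; rewrite ffunE; case: eqP => // bv rv.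
  rewrite ag // ht; first by rewrite ffunE; case: eqP.
  by apply/eqP => e; apply: bv; rewrite e.
case: (H t0) => h; first exact: key h.
apply: (key (flip u t0)) => // v nv; rewrite /flip ffunE ffunE.
by rewrite /ev ffunE (negbTE nv) addbF.
Qed.

Lemma combine (rho : RHO) i C0 C1 s0 s1 : rho i = None ->
  res_tree phi C0 s0 -> res_tree phi C1 s1 ->
  falsified (upd rho i false) C0 -> falsified (upd rho i true) C1 ->
  exists C s', [/\ res_tree phi C s', s' <= (s0 + s1).+1 & falsified rho C].
Proof.
move=> ri T0 T1 f0 f1.
have g0 : forall l, l \in C0 -> l != (i, true) -> l.1 != i /\ rho l.1 = Some (~~ l.2).
  move=> [i' b] lC nl; move: (f0 _ lC); rewrite ffunE /=; case: eqP => [e [eb]|ne ->]; last by split => //; apply/eqP.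
  by move: nl; rewrite e; case: b {lC} eb => //= _; rewrite eqxx.
have g1 : forall l, l \in C1 -> l != (i, false) -> l.1 != i /\ rho l.1 = Some (~~ l.2).
  move=> [i' b] lC nl; move: (f1 _ lC); rewrite ffunE /=; case: eqP => [e [eb]|ne ->]; last by split => //; apply/eqP.
  by move: nl; rewrite e; case: b {lC} eb => //= _; rewrite eqxx.
case: (boolP ((i, true) \in C0)) => h0; last first.
  exists C0, s0; split => //; first lia.
  by move=> l lC; apply: (g0 l lC _).2; apply: contraNneq h0 => <-.
case: (boolP ((i, false) \in C1)) => h1; last first.
  exists C1, s1; split => //; first lia.
  by move=> l lC; apply: (g1 l lC _).2; apply: contraNneq h1 => <-.
exists (resolvent C0 C1 i), (s0 + s1).+1; split => //; first exact: rt_res.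
move=> l; rewrite /resolvent inE => /orP [] /setD1P [nl lC]; [exact: (g0 l lC nl).2 | exact: (g1 l lC nl).2].
Qed.

Lemma lift_main Y s : xtree (liftIND ell phi) Y s -> forall (rho : RHO) X, inv rho X -> X \subset Y ->
  exists C s', [/\ res_tree phi C s', s' <= s & falsified rho C].
Proof.
elim=> [C' C'in|YA YB Y0 sA sB TA IHA TB IHB affY subY] rho X iX sub.
  case/bigcupP: C'in => C CF /imsetP [f _ eC']; subst C'.
  by exists C, 1; split => //; [exact: rt_ax | exact: leaf iX sub].
have cA := xtree_closed3 TA; have cB := xtree_closed3 TB.
case: iX => c3 hb hc.
pose P t := exists2 x, x \in X :&: YA & agreeU rho x t.
pose Q t := exists2 x, x \in X :&: YB & agreeU rho x t.
have hbS : forall X' : {set A}, X' \subset X -> forall i b, rho i = Some b -> forall x, x \in X' ->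
    forall j, encodes x i j -> x (inr (i, j)) = b.
  by move=> X' sX i b ri x xX'; apply: (hb i b ri x (subsetP sX x xX')).
case: (classic (forall t, P t)) => [allP|nallP].
  have iA : inv rho (X :&: YA) := Inv (closed3I c3 cA) (hbS _ (subsetIl X YA)) allP.
  have [C [s' [T l f]]] := IHA rho _ iA (subsetIr X YA).
  by exists C, s'; split => //; lia.
case: (classic (forall t, Q t)) => [allQ|nallQ].
  have iB : inv rho (X :&: YB) := Inv (closed3I c3 cB) (hbS _ (subsetIl X YB)) allQ.
  have [C [s' [T l f]]] := IHB rho _ iB (subsetIr X YB).
  by exists C, s'; split => //; lia.
have c3X : forall R, closed3 R -> c3P (fun t => exists2 x, x \in X :&: R & agreeU rho x t).
  move=> R cR t1 t2 t3 [x1 h1 a1] [x2 h2 a2] [x3 h3 a3].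
  exists (xorf x1 (xorf x2 x3)); first exact: closed3I c3 cR _ _ _ h1 h2 h3.
  by move=> v rv; rewrite !ffunE a1 // a2 // a3.
have PQ : forall t, P t \/ Q t.
  move=> t; have [x xX ag] := hc t.
  have := subsetP subY x (subsetP sub x xX); rewrite inE => /orP [xa|xb].
    by left; exists x => //; rewrite inE xX.
  by right; exists x => //; rewrite inE xX.
have dep : forall t t' : A, (forall v, rho (block v) == None -> t v = t' v) -> P t -> P t'.
  move=> t t' ht [x xX ag]; exists x => // v rv; rewrite ag // ht //; exact/eqP.
have [u [Uu hu]] := hyper dep (c3X _ cA) (c3X _ cB) PQ (not_all_ex_not _ _ nallP)
  (not_all_ex_not _ _ nallQ).
have ru : rho (block u) = None by apply/eqP.
have iX : inv rho X := Inv c3 hb hc.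
have i0 := branch false iX cA ru (fun t => match classic (P t) with
  | or_introl h => or_introl h | or_intror h => or_intror (proj2 (hu t) h) end).
have i1 : inv (upd rho (block u) true) (X :&: YB :&: Fset u true).
  apply: branch => // t; case: (classic (P t)) => h.
    right; have := PQ (flip u t); case => // h'; exfalso; exact: (proj1 (hu t) h' h).
  by left; case: (PQ t).
have [C0 [s0 [T0 l0 f0]]] := IHA _ _ i0 (subset_trans (subsetIl _ _) (subsetIr _ _)).
have [C1 [s1 [T1 l1 f1]]] := IHB _ _ i1 (subset_trans (subsetIl _ _) (subsetIr _ _)).
have [C [s' [T l f]]] := combine ru T0 T1 f0 f1.
by exists C, s'; split => //; lia.
Qed.

Lemma lift_lower s : xtree (liftIND ell phi) setT s -> exists2 s', res_tree phi set0 s' & s' <= s.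
Proof.
move=> T.
have iT : inv [ffun=> None] setT.
  split; first exact: closed3T.
    by move=> i b; rewrite ffunE.
  by move=> t; exists t; rewrite ?inE.
have [C [s' [TC l f]]] := lift_main T iT (subsetT _).
exists s' => //.
have eC : C = set0.
  apply/setP => q; rewrite inE; apply/negbTE/negP => /f; by rewrite ffunE.
by rewrite -eC.
Qed.

End Lifting.

Lemma unsat_lift N ell (phi : cnf 'I_N) : unsat phi -> unsat (liftIND ell phi).
Proof.
move=> un [a Ha].
have dec : forall i : 'I_N, exists j : 'I_(2 ^ ell), [forall j' : 'I_ell, a (inl (i, j')) == bit j j'].
  move=> i; have [j lj Hj] := bit_ex ell (fun j' => if insub j' is Some o then a (inl (i, o)) else false).
  exists (Ordinal lj); apply/forallP => j' /=; apply/eqP; rewrite Hj ?ltn_ord //.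
  by rewrite (insubT (fun k => k < ell) (ltn_ord j')) /=; congr (a (inl (i, _))); apply: val_inj.
pose d (i : 'I_N) : 'I_(2 ^ ell) := xchoose (dec i).
have dP : forall i (j' : 'I_ell), a (inl (i, j')) = bit (d i) j'.
  by move=> i j'; apply/eqP; exact: (forallP (xchooseP (dec i)) j').
pose z : assign 'I_N := [ffun i => a (inr (i, d i))].
apply: un; exists z => C CF; apply: NNPP => nC.
pose f : {ffun lit 'I_N -> 'I_(2 ^ ell)} := [ffun l => d l.1].
have : sat_clause a (liftC C f).
  apply: Ha; apply/bigcupP; exists C => //; apply/imsetP; exists f => //.
case/exists_inP => lit /bigcupP [l lC]; rewrite /lift_lit ffunE => /setU1P [->|/imsetP [j' _ ->]].
  rewrite /sat_lit /= => h; apply: nC; apply/exists_inP; exists l => //.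
  by rewrite /sat_lit ffunE.
by rewrite /sat_lit /= dP; case: (bit _ _).
Qed.


Theorem corollary19 :
  exists L : nat, forall ell : nat, L <= ell ->
  forall (N k : nat) (phi : cnf 'I_N), is_kCNF k phi -> unsat phi ->
    is_kCNF (k * (ell + 1)) (liftIND ell phi) /\
        #|liftIND ell phi| = \sum_(C in phi) (2 ^ ell) ^ #|C| /\
        #|liftIND ell phi| <= (2 ^ ell) ^ k * #|phi| /\
        ((forall C, C \in phi -> #|C| = k) -> #|liftIND ell phi| = (2 ^ ell) ^ k * #|phi|) /\
        #|{: lvar N ell}| = N * (ell + 2 ^ ell) /\
        tree_Res phi <= tree_ResX (liftIND ell phi) /\
        2 ^ (width_Res phi - k) <= tree_Res phi.
Proof.
exists 1 => ell hl N k phi hk un.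
have [s Ts] := xtree_complete (unsat_lift (ell:=ell) un).
have TX := nat_min_P (ex_intro _ s Ts).
have [s' Ts' ls'] := lift_lower hl TX.
have TR := nat_min_P (ex_intro _ s' Ts').
split; first exact: (kCNF_lift (ell:=ell) hk).
split; first exact: card_liftIND.
split.
  rewrite card_liftIND mulnC -sum_nat_const; apply: leq_sum => C CF.
  by apply: leq_pexp2l; [exact: pow2_gt0 | exact: hk].
split.
  move=> hC; rewrite card_liftIND mulnC -sum_nat_const; apply: eq_bigr => C CF.
  by rewrite hC.
split; first by rewrite card_sum !card_prod !card_ord mulnDr.
split; first exact: leq_trans (nat_min_le Ts') ls'.
exact: bsw_final hk TR.
Qed.
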